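(* Let $R$ be a right $\sigma$-reversible ring, where $\sigma$ is an endomorphism of $R$ with $\sigma(1)=1$. If $R[[x;\sigma]]$ is a p.p.-ring, then $R$ is a p.p.-ring.
   Context: All rings are associative with identity; $\sigma$ denotes a nonzero, non-identity ring endomorphism of $R$. The skew power series ring $R[[x;\sigma]]$ consists of all formal series $\sum_{i=0}^\infty a_i x^i$ with $a_i\in R$, added termwise and multiplied using distributivity and the rule $xa=\sigma(a)x$ for $a\in R$. $R$ is right $\sigma$-reversible if for all $a,b\in R$, $ab=0$ implies $b\sigma(a)=0$. A ring $S$ is a right (left) p.p.-ring if the right (left) annihilator of every element of $S$ is generated, as a right (left) ideal, by an idempotent; $S$ is a p.p.-ring if it is both a right and a left p.p.-ring. *)

(* Defs.v *)
From HB Require Import structures.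
From mathcomp Require Import all_boot all_order all_algebra.
Set Implicit Arguments. Unset Strict Implicit. Unset Printing Implicit Defensive.
Import GRing.Theory.
Local Open Scope ring_scope.

(* Right / left p.p.-ring conditions for an arbitrary multiplication [mul]
   with zero [z]: the right (left) annihilator of every element is the
   principal right (left) ideal generated by an idempotent. *)
Definition right_pp (T : Type) (mul : T -> T -> T) (z : T) : Prop :=
  forall a : T, exists e : T, mul e e = e /\
    (forall b : T, mul a b = z <-> exists c : T, b = mul e c).

Definition left_pp (T : Type) (mul : T -> T -> T) (z : T) : Prop :=
  forall a : T, exists e : T, mul e e = e /\
    (forall b : T, mul b a = z <-> exists c : T, b = mul c e).

Definition pp_ring (T : Type) (mul : T -> T -> T) (z : T) : Prop :=
  right_pp mul z /\ left_pp mul z.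

(* Skew power series ring R[[x;sigma]]: a series sum a_i x^i is represented
   by its coefficient function nat -> R; x a = sigma(a) x. *)
Definition skew_series (R : nzRingType) := nat -> R.

Definition ss_zero (R : nzRingType) : skew_series R := fun _ => 0.

(* (sum a_i x^i)(sum b_j x^j) = sum_n (sum_{i+j=n} a_i sigma^i(b_j)) x^n *)
Definition ss_mul (R : nzRingType) (sigma : R -> R)
    (f g : skew_series R) : skew_series R :=
  fun n => \sum_(i < n.+1) f i * iter i sigma (g (n - i)%N).

Definition right_sigma_reversible (R : nzRingType) (sigma : R -> R) : Prop :=
  forall a b : R, a * b = 0 -> b * sigma a = 0.

(* Main.v *)
Require Import Defs.
From HB Require Import structures.
From mathcomp Require Import all_boot all_order all_algebra.
From Stdlib Require Import FunctionalExtensionality.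
Import GRing.Theory.
Local Open Scope ring_scope.

Definition cst {R : nzRingType} (c : R) : skew_series R :=
  fun n => match n with O => c | _ => 0 end.

Lemma ss_mul0 {R : nzRingType} (sigma : R -> R) (f g : skew_series R) :
  ss_mul sigma f g 0%N = f 0%N * g 0%N.
Proof. by rewrite /ss_mul big_ord1. Qed.

Lemma ss_mul_cst {R : nzRingType} (sigma : R -> R) (a : R) (g : skew_series R) n :
  ss_mul sigma (cst a) g n = a * g n.
Proof.
rewrite /ss_mul big_ord_recl /= subn0 big1 ?addr0 // => i _.
by rewrite mul0r.
Qed.

Theorem theorem3p4 (R : nzRingType) (sigma : {rmorphism R -> R})
    (sigma_nonzero : exists a : R, sigma a <> 0)
    (sigma_nonid : exists a : R, sigma a <> a)
    (hrev : right_sigma_reversible sigma)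
    (hpp : pp_ring (ss_mul sigma) (ss_zero R)) :
  pp_ring (fun a b : R => a * b) 0.
Proof.
case: hpp => [hr hl]; split.
- move=> a; have [E [EE HE]] := hr (cst a).
  have aE : ss_mul sigma (cst a) E = ss_zero R by apply/HE; exists E.
  exists (E 0%N); split.
    by rewrite -(ss_mul0 sigma) EE.
  move=> b; split.
    move=> ab.
    have [C HC] : exists C, cst b = ss_mul sigma E C.
      apply/HE; apply: functional_extensionality => n.
      by rewrite ss_mul_cst; case: n => [|n] //=; rewrite ?ab ?mulr0.
    by exists (C 0%N); rewrite -(ss_mul0 sigma) -HC.
  case=> c ->; rewrite mulrA.
  have := f_equal (fun h => h 0%N) aE; rewrite /= ss_mul_cst => ->.
  by rewrite mul0r.
- move=> a; have [E [EE HE]] := hl (cst a).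
  have Ea : ss_mul sigma E (cst a) = ss_zero R by apply/HE; exists E.
  exists (E 0%N); split.
    by rewrite -(ss_mul0 sigma) EE.
  move=> b; split.
    move=> ba.
    have [C HC] : exists C, cst b = ss_mul sigma C E.
      apply/HE; apply: functional_extensionality => n.
      by rewrite ss_mul_cst; case: n => [|n] //=; rewrite ?ba ?mulr0.
    by exists (C 0%N); rewrite -(ss_mul0 sigma) -HC.
  case=> c ->; rewrite -mulrA.
  have := f_equal (fun h => h 0%N) Ea; rewrite /= ss_mul0 /= => ->.
  by rewrite mulr0.
Qed.
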